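(* Let $G$ be a finite cyclic group (written additively) and let $\mathcal A=\mathcal O(K,G)$ be an orbit S-ring over $G$ for some subgroup $K\le\mathrm{Aut}(G)$. Suppose there is a basic set $X$ of $\mathcal A$ such that $X^{(-1)}\subseteq X+X$ and $X$ generates $G$. Then there exists an integer $b$ such that $Y^{(b)}=Y^{(-b-1)}=Y$ for every basic set $Y$ of $\mathcal A$. In particular, $Y^{(-1)}\subseteq Y+Y$ for every basic set $Y$.
   Context: An S-ring over a finite group $G$ is a subring $\mathcal A$ of the group ring $\mathbb{Z}[G]$ having a $\mathbb{Z}$-basis $\{\underline X:X\in\mathcal S\}$ for a partition $\mathcal S$ of $G$ with $\{0\}\in\mathcal S$ and $X^{(-1)}\in\mathcal S$ for all $X\in\mathcal S$, where $\underline X=\sum_{x\in X}x$; elements of $\mathcal S$ are basic sets. For $K\le\mathrm{Aut}(G)$, $\mathcal O(K,G)$ is the S-ring whose basic sets are the orbits of $K$ on $G$. For $X\subseteq G$ and an integer $m$, $X^{(m)}=\{mx:x\in X\}$, and $X+X=\{x+x':x,x'\in X\}$. *)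

(* Defs.v *)
(* The finite cyclic group G is a cyclic subgroup of a
   finGroupType, written multiplicatively (the paper's additive notation:
   x + y ~ x * y, m x ~ x ^ m, X + X ~ X * X). *)
From mathcomp Require Import all_boot all_algebra all_fingroup all_solvable.
Set Implicit Arguments. Unset Strict Implicit. Unset Printing Implicit Defensive.

Definition zexpg (gT : finGroupType) (x : gT) (m : int) : gT :=
  match m with
  | Posz n => x ^+ n
  | Negz n => (x ^+ n.+1)^-1
  end.

Definition spow (gT : finGroupType) (X : {set gT}) (m : int) : {set gT} :=
  [set zexpg x m | x in X].

(* Basic sets of the orbit S-ring O(K,G): the orbits of K on G. *)
Definition orbit_basic_sets (gT : finGroupType) (K : {group {perm gT}})
  (G : {group gT}) : {set {set gT}} :=
  orbit 'P K @: G.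

(* Main.v *)
Require Import Defs.
From mathcomp Require Import all_boot all_algebra all_fingroup all_solvable.
Set Implicit Arguments. Unset Strict Implicit. Unset Printing Implicit Defensive.
Import GroupScope.

Lemma aut_cycle_pow (gT : finGroupType) (a : gT) (f : {perm gT}) :
  f \in Aut <[a]> -> exists n, forall x, x \in <[a]> -> f x = x ^+ n.
Proof.
move=> Af; have: f a \in <[a]> by rewrite (Aut_closed Af) ?cycle_id.
case/cycleP=> n fa; exists n => x /cycleP[k ->].
by rewrite -(autmE Af) morphX ?cycle_id //= autmE fa -!expgM mulnC.
Qed.

Lemma orbit_closed (gT : finGroupType) (K : {group {perm gT}}) y0 t z :
  t \in K -> z \in orbit 'P K y0 -> t z \in orbit 'P K y0.
Proof.
move=> tK /orbitP[s sK <-]; apply/orbitP; exists (s * t); first by rewrite groupM.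
by rewrite /= !apermE permM.
Qed.

Lemma spow_orbit (gT : finGroupType) (G : {group gT}) (K : {group {perm gT}})
  y0 t m : K \subset Aut G -> y0 \in G -> t \in K ->
  (forall x, x \in G -> t x = zexpg x m) -> spow (orbit 'P K y0) m = orbit 'P K y0.
Proof.
move=> KA y0G tK ht.
have sub : orbit 'P K y0 \subset G.
  apply/subsetP => z /orbitP[s sK <-]; rewrite /= apermE.
  by rewrite (Aut_closed (subsetP KA _ sK)).
have -> : spow (orbit 'P K y0) m = t @: orbit 'P K y0.
  apply: eq_in_imset => z zY; rewrite ht //; exact: (subsetP sub).
apply/eqP; rewrite eqEcard card_imset; last exact: perm_inj.
rewrite leqnn andbT; apply/subsetP => z /imsetP[w wY ->].
exact: orbit_closed.
Qed.

Theorem lemma4p6 (gT : finGroupType) (G : {group gT})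
  (K : {group {perm gT}}) (X : {set gT}) :
  cyclic G ->
  K \subset Aut G ->
  X \in orbit_basic_sets K G ->
  spow X (-1)%R \subset (X * X)%g ->
  <<X>>%g = G ->
  (exists b : int, forall Y, Y \in orbit_basic_sets K G ->
      spow Y b = Y /\ spow Y (- b - 1)%R = Y) /\
  (forall Y, Y \in orbit_basic_sets K G -> spow Y (-1)%R \subset (Y * Y)%g).
Proof.
move=> /cyclicP[g defG] KA /imsetP[x0 x0G ->] Hinv genX.
have powK : forall t, t \in K -> exists n, forall x, x \in G -> t x = x ^+ n.
  move=> t tK; have : t \in Aut <[g]> by rewrite -defG (subsetP KA).
  by case/aut_cycle_pow=> n hn; exists n => x; rewrite defG; apply: hn.
have x0inv : x0^-1 \in spow (orbit 'P K x0) (-1)%R.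
  by apply/imsetP; exists x0; [exact: orbit_refl | rewrite /= expg1].
have [y1 z1 yX zX e] := mulsgP (subsetP Hinv _ x0inv).
case/orbitP: yX => t1 t1K; rewrite /= apermE => ey.
case/orbitP: zX => t2 t2K; rewrite /= apermE => ez.
have [m1 h1] := powK _ t1K; have [m2 h2] := powK _ t2K.
have Xsub : G \subset <[x0]>.
  rewrite -genX gen_subG; apply/subsetP => w /orbitP[s sK <-].
  have [n hn] := powK _ sK; by rewrite /= apermE hn // mem_cycle.
have key : forall y, y \in G -> y^-1 = y ^+ m1 * y ^+ m2.
  move=> y /(subsetP Xsub) /cycleP[j ->].
  have e0 : x0^-1 = x0 ^+ m1 * x0 ^+ m2 by rewrite e -ey -ez h1 // h2.
  rewrite -!expgM -expgD -mulnDr mulnC expgM.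
  by rewrite expgD -e0 expgVn.
split.
  exists (Posz m1) => _ /imsetP[y0 y0G ->]; split.
    by apply: (spow_orbit KA y0G t1K) => x xG; rewrite h1.
  apply: (spow_orbit KA y0G t2K) => x xG.
  have -> : (- Posz m1 - 1)%R = Negz m1 by rewrite NegzE -addn1 PoszD GRing.opprD.
  rewrite /= h2 // expgSr invMg key // (commuteX2 m1 m2 (commute_refl x)).
  by rewrite mulgK.
move=> _ /imsetP[y0 y0G ->]; apply/subsetP => w /imsetP[y yY ->] /=.
have yG : y \in G.
  case/orbitP: yY => s sK <-; by rewrite /= apermE (Aut_closed (subsetP KA _ sK)).
rewrite expg1 key // -h1 // -h2 //.
by apply: mem_mulg; apply: orbit_closed.
Qed.
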